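(* There are absolute constants $C,c>0$ such that the following holds. Let $P$ be a set of $n$ points in $\mathbb{R}^2$ in general position, let $r\ge 1$ be an integer, and let $\Lambda(r)$ be a slab decomposition of $P$ as defined below. Then for every $\epsilon'\ge 0$ there is a set of at most $C\, r\cdot f_2(c\,\epsilon' r)$ points in $\mathbb{R}^2$ that pierces (i.e. meets) every convex set $K$ that is $\epsilon'$-crowded in $\Lambda(r)$.
   Context: General position: no three points of $P$ are collinear and no two lie on a common vertical line. $f_2(x)$ denotes the smallest integer $f$ such that every finite point set $P'\subset\mathbb{R}^2$ admits a set of at most $f$ points meeting every convex set $K$ with $|K\cap P'|\ge x|P'|$; by convention $f_2(x)=1$ for $x\ge 1$. For an integer $r\ge1$, ${\cal Y}(r)$ is a set of $r$ vertical lines, none passing through a point of $P$, such that each of the $r+1$ open vertical slabs (the two extreme ones being halfplanes) of $\mathbb{R}^2\setminus\bigcup{\cal Y}(r)$ contains between $\lfloor n/(r+1)\rfloor$ and $\lceil n/(r+1)\rceil$ points of $P$; $\Lambda(r)$ denotes this collection of slabs. A convex set $K$ is $\epsilon'$-crowded in $\Lambda(r)$ if some slab of $\Lambda(r)$ contains at least $\epsilon' n$ points of $P\cap K$, and $\epsilon'$-spread otherwise. *)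

(* Defs.v *)
From Stdlib Require Import Reals Lra List Sorting.Sorted Classical ClassicalEpsilon.
Import ListNotations.
Open Scope R_scope.

Definition point : Type := (R * R)%type.

Definition decP (A : Prop) : bool :=
  if excluded_middle_informative A then true else false.

Definition card_in (S : point -> Prop) (P : list point) : nat :=
  length (filter (fun p => decP (S p)) P).

Definition convex (K : point -> Prop) : Prop :=
  forall (p q : point) (t : R), K p -> K q -> 0 <= t <= 1 ->
    K (t * fst p + (1 - t) * fst q, t * snd p + (1 - t) * snd q).

Definition collinear (p q s : point) : Prop :=
  (fst q - fst p) * (snd s - snd p) - (snd q - snd p) * (fst s - fst p) = 0.

Definition general_position (P : list point) : Prop :=
  NoDup P /\
  (forall p q, In p P -> In q P -> p <> q -> fst p <> fst q) /\
  (forall p q s, In p P -> In q P -> In s P ->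
     p <> q -> q <> s -> p <> s -> ~ collinear p q s).

(* Slab i (0 <= i <= r) determined by the sorted x-coordinates ys of the
   r vertical lines: slab 0 and slab r are open halfplanes. *)
Definition in_slab (ys : list R) (i : nat) (p : point) : Prop :=
  (i = 0%nat \/ nth (i - 1) ys 0 < fst p) /\
  (i = length ys \/ fst p < nth i ys 0).

(* ys : the x-coordinates of the lines of Y(r); Lambda(r) = the slabs. *)
Definition slab_decomposition (P : list point) (r : nat) (ys : list R) : Prop :=
  length ys = r /\
  Sorted Rlt ys /\
  (forall y p, In y ys -> In p P -> fst p <> y) /\
  (forall i, (i <= r)%nat ->
     (length P / (r + 1) <= card_in (in_slab ys i) P <=
      (length P + r) / (r + 1))%nat).

Definition crowded (eps : R) (P : list point) (ys : list R)
  (K : point -> Prop) : Prop :=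
  exists i, (i <= length ys)%nat /\
    INR (card_in (fun p => K p /\ in_slab ys i p) P) >= eps * INR (length P).

Definition weak_net_bound (x : R) (f : nat) : Prop :=
  forall P' : list point, P' <> [] -> NoDup P' ->
    exists Q : list point, (length Q <= f)%nat /\
      forall K, convex K ->
        INR (card_in K P') >= x * INR (length P') ->
        exists q, In q Q /\ K q.

(* is_f2 x f  :<->  f_2(x) = f  (f_2(x) = 1 for x >= 1 by convention,
   otherwise the least f with weak_net_bound x f; if no such f exists,
   f_2(x) is infinite and no f satisfies is_f2 x f). *)
Definition is_f2 (x : R) (f : nat) : Prop :=
  (1 <= x /\ f = 1%nat) \/
  (x < 1 /\ weak_net_bound x f /\ forall g, weak_net_bound x g -> (f <= g)%nat).

(* Main.v *)
Require Import Defs.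
From Stdlib Require Import Reals List Lra Lia Psatz Classical ClassicalEpsilon.
Open Scope R_scope.

Lemma decP_and (A B : Prop) : decP (A /\ B) = (decP A && decP B)%bool.
Proof.
  unfold decP.
  destruct (excluded_middle_informative (A /\ B)) as [[Ha Hb]|H];
  destruct (excluded_middle_informative A); destruct (excluded_middle_informative B);
  simpl; tauto.
Qed.

Lemma card_filter (K S : point -> Prop) (P : list point) :
  card_in K (filter (fun p => decP (S p)) P) = card_in (fun p => K p /\ S p) P.
Proof.
  unfold card_in; induction P as [|a P IH]; simpl; auto.
  rewrite decP_and.
  destruct (decP (S a)) eqn:E1; destruct (decP (K a)) eqn:E2; simpl; rewrite ?E2; simpl; rewrite ?IH; auto.
Qed.

Lemma card_le (S : point -> Prop) L : (card_in S L <= length L)%nat.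
Proof.
  unfold card_in; induction L as [|a L IH]; simpl; auto.
  destruct (decP (S a)); simpl; lia.
Qed.

Lemma card_pos_in (S : point -> Prop) L : (0 < card_in S L)%nat -> exists p, In p L /\ S p.
Proof.
  unfold card_in; induction L as [|a L IH]; simpl; [lia|].
  unfold decP at 1.
  destruct (excluded_middle_informative (S a)) as [H|H]; simpl; intros.
  - exists a; auto.
  - destruct (IH H0) as [p [? ?]]; eauto.
Qed.

Lemma f_pos x f : is_f2 x f -> (1 <= f)%nat.
Proof.
  intros [[_ ->]|[Hx [Hw _]]]; [lia|].
  destruct (Hw ((0,0) :: nil)) as [Q [HQ HK]].
  - discriminate.
  - constructor; [simpl; tauto| constructor].
  - destruct (HK (fun _ => True)) as [q [Hq _]].
    + unfold convex; auto.
    + unfold card_in; simpl. unfold decP.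
      destruct (excluded_middle_informative True); [|tauto]. simpl. lra.
    + destruct Q; simpl in *; [tauto|lia].
Qed.

Lemma eps_pos x f : is_f2 x f -> x = 0 -> False.
Proof.
  intros [[H _]|[Hx [Hw _]]] Hx0; [lra|].
  destruct (Hw ((0,0) :: nil)) as [Q [HQ HK]].
  - discriminate.
  - constructor; [simpl; tauto| constructor].
  - destruct (HK (fun _ => False)) as [q [_ Hq]]; auto.
    + unfold convex; auto.
    + rewrite Hx0. apply Rle_ge. rewrite Rmult_0_l. apply pos_INR.
Qed.

Lemma nat_key a n r : (a * (r + 1) <= n + r)%nat -> (r <= n)%nat -> (r * a <= 2 * n)%nat.
Proof. intros; nia. Qed.

Lemma div_mul_le a b : (0 < b)%nat -> (a / b * b <= a)%nat.
Proof. intros. rewrite Nat.mul_comm. apply Nat.mul_div_le. lia. Qed.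

Theorem mainTheorem3 :
  exists C c : R, 0 < C /\ 0 < c /\
    forall (P : list point) (r : nat) (ys : list R),
      P <> nil ->
      general_position P ->
      (1 <= r)%nat ->
      slab_decomposition P r ys ->
      forall eps : R, 0 <= eps ->
      forall f : nat, is_f2 (c * eps * INR r) f ->
      exists Q : list point,
        INR (length Q) <= C * INR r * INR f /\
        forall K : point -> Prop, convex K -> crowded eps P ys K ->
          exists q, In q Q /\ K q.
Proof.
  exists 2, (1/4). split; [lra|]. split; [lra|].
  intros P r ys HP HG Hr HS eps Heps f Hf.
  assert (Hf1 := f_pos _ _ Hf).
  assert (He : 0 < eps).
  { destruct Heps as [|He]; auto. exfalso. apply (eps_pos _ _ Hf). subst; ring. }
  assert (Hn1 : (1 <= length P)%nat) by (destruct P; [congruence| simpl; lia]).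
  assert (HrR : 1 <= INR r) by (apply (le_INR 1); auto).
  assert (HfR : 1 <= INR f) by (apply (le_INR 1); auto).
  destruct (Nat.lt_ge_cases (length P) r) as [Hsmall|Hbig].
  - exists P. split.
    + apply lt_INR in Hsmall. nra.
    + intros K _ [i [Hi Hc]].
      assert (Hpos : (0 < card_in (fun p => K p /\ in_slab ys i p) P)%nat).
      { destruct (card_in (fun p => K p /\ in_slab ys i p) P) eqn:E; [|lia].
        exfalso. simpl in Hc. apply (le_INR 1) in Hn1. simpl in Hn1. nra. }
      destruct (card_pos_in _ _ Hpos) as [p [? [? _]]]. eauto.
  - destruct HS as [Hlen [_ [_ Hcard]]].
    set (x := 1/4 * eps * INR r) in *.
    set (Pi := fun i => filter (fun p => decP (in_slab ys i p)) P).
    assert (Hloc : forall i, (i <= r)%nat -> exists Qi : list point, (length Qi <= f)%nat /\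
      forall K, convex K -> INR (card_in K (Pi i)) >= eps * INR (length P) ->
        exists q, In q Qi /\ K q).
    { intros i Hi.
      assert (Hpi : (length (Pi i) * (r + 1) <= length P + r)%nat).
      { destruct (Hcard i Hi) as [_ H2]. unfold card_in in H2.
        eapply Nat.le_trans; [apply Nat.mul_le_mono_r; exact H2|].
        apply div_mul_le; lia. }
      assert (Hk := nat_key _ _ _ Hpi Hbig).
      apply le_INR in Hk. rewrite mult_INR, mult_INR in Hk. simpl in Hk.
      assert (Hcle : forall K, (card_in K (Pi i) <= length (Pi i))%nat) by (intros; apply card_le).
      destruct (list_eq_dec (fun a b : point => excluded_middle_informative (a = b)) (Pi i) nil) as [E|NE].
      - exists nil. split; [simpl; lia|].
        intros K _ Hc. exfalso. assert (H0 := Hcle K). assert (length (Pi i) = 0%nat) by (rewrite E; reflexivity).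
        assert (Hz : card_in K (Pi i) = 0%nat) by lia. rewrite Hz in Hc. change (INR 0) with 0 in Hc.
        apply (le_INR 1) in Hn1. change (INR 1) with 1 in Hn1.
        assert (eps * INR (length P) > 0) by (apply Rmult_lt_0_compat; lra). lra.
      - destruct Hf as [[Hx1 _]|[Hx1 [Hw _]]].
        + exists nil. split; [simpl; lia|]. intros K _ Hc. exfalso.
          assert (H0 := le_INR _ _ (Hcle K)).
          apply (le_INR 1) in Hn1. simpl in Hn1. unfold x in Hx1.
          set (cK := INR (card_in K (Pi i))) in *.
          set (a := INR (length (Pi i))) in *.
          set (n := INR (length P)) in *.
          assert (cK * INR r >= eps * n * INR r) by (apply Rmult_ge_compat_r; lra).
          assert (cK * INR r <= a * INR r) by (apply Rmult_le_compat_r; lra).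
          assert (eps * INR r >= 4) by lra.
          assert (eps * n * INR r >= 4 * n) by nra.
          lra.
        + destruct (Hw (Pi i) NE) as [Qi [HQ HK]].
          * apply NoDup_filter. destruct HG; auto.
          * exists Qi. split; auto. intros K HKc Hc. apply HK; auto.
            unfold x. apply Rle_ge. apply Rge_le in Hc.
            eapply Rle_trans; [|exact Hc].
            assert (0 <= INR (length (Pi i))) by apply pos_INR.
            assert (Hk2 : INR r * INR (length (Pi i)) <= 2 * INR (length P)).
            { assert (Hk' := nat_key _ _ _ Hpi Hbig). apply le_INR in Hk'.
              rewrite !mult_INR in Hk'. exact Hk'. }
            assert (eps * (INR r * INR (length (Pi i))) <= eps * (2 * INR (length P)))
              by (apply Rmult_le_compat_l; lra).
            assert (0 <= INR (length P)) by apply pos_INR.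
            nra. }
    assert (Hall : forall m, (m <= r + 1)%nat -> exists Q : list point,
       (length Q <= m * f)%nat /\ forall i, (i < m)%nat -> forall K, convex K ->
         INR (card_in K (Pi i)) >= eps * INR (length P) -> exists q, In q Q /\ K q).
    { induction m as [|m IH]; intros Hm.
      - exists nil. split; [simpl; lia|]. intros; lia.
      - destruct (IH ltac:(lia)) as [Q [HQ HK]].
        destruct (Hloc m ltac:(lia)) as [Qi [HQi HKi]].
        exists (Q ++ Qi). split.
        + rewrite length_app. simpl. lia.
        + intros i Hi K HKc Hc. destruct (Nat.eq_dec i m) as [->|Hne].
          * destruct (HKi K HKc Hc) as [q [? ?]]. exists q. split; auto. apply in_or_app; auto.
          * destruct (HK i ltac:(lia) K HKc Hc) as [q [? ?]]. exists q. split; auto. apply in_or_app; auto. }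
    destruct (Hall (r + 1)%nat ltac:(lia)) as [Q [HQ HK]].
    exists Q. split.
    + apply le_INR in HQ. rewrite mult_INR, plus_INR in HQ. simpl in HQ. nra.
    + intros K HKc [i [Hi Hc]]. rewrite Hlen in Hi.
      apply (HK i ltac:(lia) K HKc). unfold Pi. rewrite card_filter. exact Hc.
Qed.
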